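(* Let $f\colon \mathbb{R}^n \times \mathbb{R}^p \rightarrow \overline{\mathbb{R}}$ be a proper nearly convex function and $G\colon \mathbb{R}^n \rightrightarrows \mathbb{R}^p$ a nearly convex set-valued mapping. Let $m(x)=\inf\{f(x,y)\mid y\in G(x)\}$ (with $\inf\emptyset=\infty$), and assume $m$ is finite at $\bar x \in \mathbb{R}^n$. For $\eta>0$ let $S_\eta(\bar x)= \{ y \in G(\bar x) \mid f (\bar x, y) \le m (\bar x)+\eta \}$, and for $\varepsilon,\eta\ge0$ let $\varGamma(\eta+\varepsilon)=\{(\gamma_1, \gamma_2) \mid \gamma_1 \ge 0,\ \gamma_2 \ge 0,\ \gamma_1+\gamma_2=\eta+\varepsilon\}$. If $$\mathrm{ri}(\mathrm{dom}\, f ) \cap \mathrm{ri}(\mathrm{gph}\, G ) \neq\emptyset,$$ then for every $\varepsilon \ge 0$, $$\begin{aligned}\partial _\varepsilon m(\bar x)&=\bigcap_{\eta >0}\ \bigcap_{ y \in S_\eta (\bar x)}\ \bigcup_{(\gamma_1, \gamma_2) \in \varGamma(\eta+\varepsilon)}\big\{\xi\in \mathbb{R}^n \mid (\xi,0) \in \partial_{\gamma_1}f(\bar x,y) +N_{\gamma_2}((\bar x, y); \mathrm{gph}\, G ) \big\}\\ &=\bigcap_{\eta >0}\ \bigcup_{y \in \mathbb{R}^p}\ \bigcup_{(\gamma_1, \gamma_2) \in \varGamma(\eta+\varepsilon)}\big\{\xi \in \mathbb{R}^n \mid (\xi,0) \in \partial_{\gamma_1}f(\bar x, y) +N_{\gamma_2}((\bar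 x, y); \mathrm{gph}\, G ) \big\}.\end{aligned}$$
   Context: $\overline{\mathbb{R}}=[-\infty,\infty]$; proper means nonempty domain $\mathrm{dom}\,f=\{z\mid f(z)<\infty\}$ and never $-\infty$. A set $D$ is nearly convex if there is a convex $E$ with $E\subset D\subset\overline{E}$; a function is nearly convex if its epigraph is nearly convex; a set-valued mapping is nearly convex if its graph $\mathrm{gph}\,G=\{(x,y)\mid y\in G(x)\}$ is nearly convex. $\mathrm{ri}\,D=\{a\in D\mid\exists\delta>0,\ B(a;\delta)\cap\mathrm{aff}\,D\subset D\}$. For $\psi$ on $\mathbb{R}^k$, $\gamma\ge0$ and $\bar z$ with $\psi(\bar z)$ finite, $\partial_\gamma\psi(\bar z)=\{\zeta\mid\langle\zeta,z-\bar z\rangle-\gamma\le\psi(z)-\psi(\bar z)\ \forall z\}$ (the set-builder conditions are understood for those $y$ at which these objects are defined). For nonempty $\Omega$ and $\bar z\in\Omega$, $N_\gamma(\bar z;\Omega)=\{\zeta\mid\langle\zeta,z-\bar z\rangle\le\gamma\ \forall z\in\Omega\}$. Sums of sets are Minkowski sums. *)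

(* Defs.v *)
From HB Require Import structures.
From mathcomp Require Import all_boot all_order all_algebra.
From mathcomp Require Import all_classical all_reals ereal.
Set Implicit Arguments. Unset Strict Implicit. Unset Printing Implicit Defensive.
Import Order.TTheory GRing.Theory Num.Theory.
Local Open Scope classical_set_scope.
Local Open Scope ring_scope.

Section Defs.
Variable R : realType.

Definition dotv (k : nat) (u v : 'rV[R]_k) : R := \sum_(i < k) u ord0 i * v ord0 i.

Definition eball (k : nat) (a : 'rV[R]_k) (d : R) : set 'rV[R]_k :=
  [set z | dotv (z - a) (z - a) < d ^+ 2].

Definition convex_set (k : nat) (E : set 'rV[R]_k) : Prop :=
  forall x y, E x -> E y -> forall t : R, 0 <= t -> t <= 1 -> E (t *: x + (1 - t) *: y).

Definition eclosure (k : nat) (E : set 'rV[R]_k) : set 'rV[R]_k :=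
  [set x | forall d : R, 0 < d -> exists2 y, E y & eball x d y].

Definition aff (k : nat) (D : set 'rV[R]_k) : set 'rV[R]_k :=
  [set x | exists (N : nat) (c : 'I_N -> R) (v : 'I_N -> 'rV[R]_k),
     [/\ forall i, D (v i), \sum_(i < N) c i = 1 & x = \sum_(i < N) c i *: v i]].

Definition ri (k : nat) (D : set 'rV[R]_k) : set 'rV[R]_k :=
  [set a | D a /\ exists2 d : R, 0 < d & eball a d `&` aff D `<=` D].

Definition nearly_convex_set (k : nat) (D : set 'rV[R]_k) : Prop :=
  exists E : set 'rV[R]_k, [/\ convex_set E, E `<=` D & D `<=` eclosure E].

(* epigraph of f : R^k -> \bar R, as a subset of R^(k+1) = R^k x R *)
Definition epi (k : nat) (f : 'rV[R]_k -> \bar R) : set 'rV[R]_(k + 1) :=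
  [set w | (f (lsubmx w) <= (rsubmx w ord0 ord0)%:E)%E].

Definition nearly_convex_fun (k : nat) (f : 'rV[R]_k -> \bar R) : Prop :=
  nearly_convex_set (epi f).

Definition edom (k : nat) (f : 'rV[R]_k -> \bar R) : set 'rV[R]_k :=
  [set z | (f z < +oo)%E].

Definition proper_fun (k : nat) (f : 'rV[R]_k -> \bar R) : Prop :=
  (exists z, edom f z) /\ (forall z, f z <> -oo%E).

(* graph of G : R^n => R^p, as a subset of R^(n+p) = R^n x R^p *)
Definition gph (n p : nat) (G : 'rV[R]_n -> set 'rV[R]_p) : set 'rV[R]_(n + p) :=
  [set z | G (lsubmx z) (rsubmx z)].

(* gamma-subdifferential; empty when psi zb is not finite *)
Definition esubdiff (k : nat) (psi : 'rV[R]_k -> \bar R) (gamma : R) (zb : 'rV[R]_k)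
  : set 'rV[R]_k :=
  [set zeta | psi zb \is a fin_num /\
     forall z, ((dotv zeta (z - zb) - gamma)%:E <= psi z - psi zb)%E].

(* gamma-normal cone; empty when zb is not in Omega *)
Definition enormal (k : nat) (gamma : R) (zb : 'rV[R]_k) (Omega : set 'rV[R]_k)
  : set 'rV[R]_k :=
  [set zeta | Omega zb /\ forall z, Omega z -> dotv zeta (z - zb) <= gamma].

Definition msum (k : nat) (A B : set 'rV[R]_k) : set 'rV[R]_k :=
  [set z | exists a b, [/\ A a, B b & z = a + b]].

Definition optval (n p : nat) (f : 'rV[R]_(n + p) -> \bar R)
  (G : 'rV[R]_n -> set 'rV[R]_p) (x : 'rV[R]_n) : \bar R :=
  ereal_inf [set f (row_mx x y) | y in G x].

Definition Seta (n p : nat) (f : 'rV[R]_(n + p) -> \bar R)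
  (G : 'rV[R]_n -> set 'rV[R]_p) (eta : R) (xb : 'rV[R]_n) : set 'rV[R]_p :=
  [set y | G xb y /\ (f (row_mx xb y) <= optval f G xb + eta%:E)%E].

Definition Gam (t : R) : set (R * R) :=
  [set g | [/\ 0 <= g.1, 0 <= g.2 & g.1 + g.2 = t]].

Definition xiset (n p : nat) (f : 'rV[R]_(n + p) -> \bar R)
  (G : 'rV[R]_n -> set 'rV[R]_p) (xb : 'rV[R]_n) (y : 'rV[R]_p) (g : R * R)
  : set 'rV[R]_n :=
  [set xi | msum (esubdiff f g.1 (row_mx xb y)) (enormal g.2 (row_mx xb y) (gph G))
              (row_mx xi 0)].

End Defs.

(* Main.v *)
Require Import Defs.
From HB Require Import structures.
From mathcomp Require Import all_boot all_order all_algebra.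
From mathcomp Require Import all_classical all_reals ereal.
From mathcomp Require Import ring lra.
Set Implicit Arguments. Unset Strict Implicit. Unset Printing Implicit Defensive.
Import Order.TTheory GRing.Theory Num.Theory.
Local Open Scope classical_set_scope.
Local Open Scope ring_scope.

Section Basics.
Variable R : realType.
Implicit Types k : nat.

Lemma dotvDl k (u v w : 'rV[R]_k) : dotv (u + v) w = dotv u w + dotv v w.
Proof. by rewrite /dotv -big_split; apply: eq_bigr => i _; rewrite mxE mulrDl. Qed.
Lemma dotvDr k (u v w : 'rV[R]_k) : dotv w (u + v) = dotv w u + dotv w v.
Proof. by rewrite /dotv -big_split; apply: eq_bigr => i _; rewrite mxE mulrDr. Qed.
Lemma dotvZl k a (u w : 'rV[R]_k) : dotv (a *: u) w = a * dotv u w.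
Proof. by rewrite /dotv mulr_sumr; apply: eq_bigr => i _; rewrite mxE mulrA. Qed.
Lemma dotvZr k a (u w : 'rV[R]_k) : dotv w (a *: u) = a * dotv w u.
Proof. by rewrite /dotv mulr_sumr; apply: eq_bigr => i _; rewrite mxE mulrCA. Qed.
Lemma dotvNl k (u w : 'rV[R]_k) : dotv (- u) w = - dotv u w.
Proof. by rewrite -scaleN1r dotvZl mulN1r. Qed.
Lemma dotvNr k (u w : 'rV[R]_k) : dotv w (- u) = - dotv w u.
Proof. by rewrite -scaleN1r dotvZr mulN1r. Qed.
Lemma dotvBl k (u v w : 'rV[R]_k) : dotv (u - v) w = dotv u w - dotv v w.
Proof. by rewrite dotvDl dotvNl. Qed.
Lemma dotvBr k (u v w : 'rV[R]_k) : dotv w (u - v) = dotv w u - dotv w v.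
Proof. by rewrite dotvDr dotvNr. Qed.
Lemma dotv0l k (w : 'rV[R]_k) : dotv 0 w = 0.
Proof. by rewrite /dotv big1 // => i _; rewrite mxE mul0r. Qed.
Lemma dotv0r k (w : 'rV[R]_k) : dotv w 0 = 0.
Proof. by rewrite /dotv big1 // => i _; rewrite mxE mulr0. Qed.
Lemma dotvC k (u w : 'rV[R]_k) : dotv u w = dotv w u.
Proof. by apply: eq_bigr => i _; rewrite mulrC. Qed.

Lemma dotv_row_mx n p (a : 'rV[R]_n) (b : 'rV[R]_p) c d :
  dotv (row_mx a b) (row_mx c d) = dotv a c + dotv b d.
Proof.
by rewrite /dotv big_split_ord /=; congr (_ + _); apply: eq_bigr => i _;
  rewrite ?row_mxEl ?row_mxEr.
Qed.

Lemma dotv_split n p (a : 'rV[R]_(n + p)) (W : 'rV[R]_(n + p)) :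
  dotv a W = dotv (lsubmx a) (lsubmx W) + dotv (rsubmx a) (rsubmx W).
Proof. by rewrite -{1}(hsubmxK a) -{1}(hsubmxK W) dotv_row_mx. Qed.

Lemma sq_le_dotv k (u : 'rV[R]_k) i : u ord0 i ^+ 2 <= dotv u u.
Proof.
rewrite /dotv (bigD1 i) //= -expr2 lerDl sumr_ge0 // => j _.
by rewrite -expr2 sqr_ge0.
Qed.

Lemma dotv_ge0 k (u : 'rV[R]_k) : 0 <= dotv u u.
Proof. by rewrite /dotv sumr_ge0 // => j _; rewrite -expr2 sqr_ge0. Qed.

Lemma eball_entry k (a x : 'rV[R]_k) d : 0 <= d -> eball a d x ->
  forall i, `|x ord0 i - a ord0 i| < d.
Proof.
move=> d0 H i; have := le_lt_trans (sq_le_dotv (x - a) i) H.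
rewrite !mxE; set y := x ord0 i - a ord0 i => h.
by case: (lerP 0 y) => hy; [rewrite ger0_norm // | rewrite ltr0_norm //]; nra.
Qed.

Lemma dot_bound k (b u : 'rV[R]_k) d : (forall i, `|u ord0 i| <= d) ->
  `|dotv b u| <= (\sum_i `|b ord0 i|) * d.
Proof.
move=> H; rewrite /dotv mulr_suml (le_trans (ler_norm_sum _ _ _)) //.
apply: ler_sum => i _; rewrite normrM ler_wpM2l //.
Qed.

Definition Kmx k m (M : 'M[R]_(k, m)) : R := \sum_i \sum_j `|M i j|.

Lemma Kmx_ge0 k m (M : 'M[R]_(k, m)) : 0 <= Kmx M.
Proof. by apply: sumr_ge0 => i _; apply: sumr_ge0. Qed.

Lemma mulmx_bound k m (u : 'rV[R]_k) (M : 'M[R]_(k, m)) d :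
  (forall i, `|u ord0 i| <= d) -> forall j, `|(u *m M) ord0 j| <= Kmx M * d.
Proof.
move=> H j; rewrite mxE (le_trans (ler_norm_sum _ _ _)) // /Kmx mulr_suml.
apply: ler_sum => i _; rewrite normrM.
have d0 : 0 <= d by apply: le_trans (H i).
apply: (le_trans (ler_wpM2r (normr_ge0 _) (H i))).
rewrite mulrC ler_wpM2r // (bigD1 j) //= lerDl sumr_ge0 //.
Qed.

Lemma dotv_bound k (u : 'rV[R]_k) d : (forall i, `|u ord0 i| <= d) ->
  dotv u u <= k%:R * d ^+ 2.
Proof.
move=> H; rewrite /dotv.
have -> : k%:R * d ^+ 2 = \sum_(i < k) d ^+ 2 by rewrite sumr_const card_ord mulr_natl.
apply: ler_sum => i _; rewrite -expr2 -real_normK ?num_real //.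
by rewrite lerXn2r ?nnegrE // (le_trans _ (H i)).
Qed.

Lemma entries_eball k (a x : 'rV[R]_k) d D : (forall i, `|x ord0 i - a ord0 i| <= d) ->
  k%:R * d ^+ 2 < D ^+ 2 -> eball a D x.
Proof.
move=> H h; rewrite /eball /=; apply: le_lt_trans h; apply: dotv_bound => i.
by rewrite !mxE.
Qed.

Lemma small_zero (y K : R) : (forall d, 0 < d -> `|y| <= K * d) -> y = 0.
Proof.
move=> H; apply/normr0_eq0/eqP; rewrite eq_le normr_ge0 andbT.
have K0 : 0 <= K.
  have := H 1 ltr01; rewrite mulr1; exact: le_trans.
rewrite leNgt; apply/negP => yp.
have K1 : 0 < K + 1 by rewrite ltr_wpDl.
have dp : 0 < `|y| / (2 * (K + 1)) by rewrite divr_gt0 // mulr_gt0.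
have := H _ dp; rewrite mulrA ler_pdivlMr ?mulr_gt0 //. nra.
Qed.

End Basics.

Section HB.
Variable R : realType.

Lemma divle (x y s t : R) : 0 < s -> 0 < t -> x * t <= y * s -> x / s <= y / t.
Proof. by move=> s0 t0 h; rewrite ler_pdivrMr // mulrAC ler_pdivlMr. Qed.

Definition convD N (D : 'rV[R]_N -> R -> Prop) := forall w1 t1 w2 t2 (th : R),
  0 <= th -> th <= 1 -> D w1 t1 -> D w2 t2 ->
  D (th *: w1 + (1 - th) *: w2) (th * t1 + (1 - th) * t2).

Lemma dotv_delta N (c : 'rV[R]_N) j0 : dotv c (delta_mx 0 j0) = c ord0 j0.
Proof.
rewrite /dotv (bigD1 j0) //= big1 ?addr0 => [|j jj]; rewrite mxE ?eqxx //=.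
  by rewrite mulr1.
by rewrite (negPf jj) /= mulr0.
Qed.

Lemma HB N (D : 'rV[R]_N -> R -> Prop) : convD D ->
  (forall t, D 0 t -> 0 <= t) ->
  (forall w t, D w t -> exists2 r, 0 < r & exists t', D (- (r *: w)) t') ->
  exists b, forall w t, D w t -> dotv b w <= t.
Proof.
move=> cD P0 RC.
suff H : forall k, (k <= N)%N -> exists c, forall w t, D w t ->
    (forall j : 'I_N, (k <= j)%N -> w ord0 j = 0) -> dotv c w <= t.
  by have [c Hc] := H N (leqnn N); exists c => w t Dw; apply: Hc => // j; rewrite leqNgt ltn_ord.
elim => [_|k IH kN].
  exists 0 => w t Dw Hw; have w0 : w = 0.
    by apply/matrixP => i j; rewrite (ord1 i) mxE; apply: Hw.
  by rewrite dotv0l; apply: P0; rewrite -w0.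
have [c Hc] := IH (ltnW kN).
pose j0 : 'I_N := Ordinal kN.
pose e : 'rV[R]_N := delta_mx 0 j0.
pose g := dotv c e.
pose mw (w : 'rV[R]_N) := w - w ord0 j0 *: e.
pose Mk1 (w : 'rV[R]_N) := forall j : 'I_N, (k.+1 <= j)%N -> w ord0 j = 0.
have dmw w : dotv c (mw w) = dotv c w - w ord0 j0 * g by rewrite /mw dotvBr dotvZr.
pose L := [set l | exists w t, [/\ D w t, Mk1 w, w ord0 j0 < 0 &
   l = (dotv c (mw w) - t) / (- w ord0 j0)]].
pose U := [set u | exists w t, [/\ D w t, Mk1 w, 0 < w ord0 j0 &
   u = (t - dotv c (mw w)) / w ord0 j0]].
have key1 : forall l u, L l -> U u -> l <= u.
  move=> l u [w1 [t1 [D1 M1 s0 ->]]] [w2 [t2 [D2 M2 t0 ->]]].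
  set s := - w1 ord0 j0; set tau := w2 ord0 j0.
  have sp : 0 < s by rewrite /s oppr_gt0.
  pose th := tau / (s + tau).
  have th0 : 0 <= th by rewrite divr_ge0 // ltW // addr_gt0.
  have th1 : th <= 1 by rewrite ler_pdivrMr ?addr_gt0 // mul1r lerDr ltW.
  have e1 : 1 - th = s / (s + tau).
    by rewrite /th; field; rewrite gt_eqF // addr_gt0.
  have w1e : w1 ord0 j0 = - s by rewrite /s opprK.
  have M3 : forall j : 'I_N, (k <= j)%N -> (th *: w1 + (1 - th) *: w2) ord0 j = 0.
    move=> j kj; rewrite !mxE; case: (ltngtP k j) => kj'.
    - by rewrite M1 ?M2 // !mulr0 addr0.
    - by move: kj; rewrite leqNgt kj'.
    - have -> : j = j0 by apply: val_inj; rewrite /= kj'.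
      rewrite w1e -/tau e1 /th; field; rewrite gt_eqF // addr_gt0 //.
  have := Hc _ _ (cD _ _ _ _ _ th0 th1 D1 D2) M3.
  rewrite dotvDr !dotvZr e1 /th => h.
  have h2 : tau * dotv c w1 + s * dotv c w2 <= tau * t1 + s * t2.
    have sp2 : 0 < s + tau by rewrite addr_gt0.
    have eq X Y : tau / (s + tau) * X + s / (s + tau) * Y = (tau * X + s * Y) / (s + tau).
      by field; rewrite gt_eqF.
    by move: h; rewrite !eq ler_pM2r // invr_gt0.
  apply: divle => //; rewrite !dmw w1e -/tau; nra.
have key2 : L !=set0 -> U !=set0.
  move=> [l [w [t [Dw Mw wn _]]]].
  have [r r0 [t' D']] := RC _ _ Dw.
  exists ((t' - dotv c (mw (-(r*:w)))) / (-(r *: w)) ord0 j0), (-(r*:w)), t'; split => //.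
    by move=> j kj; rewrite !mxE Mw // mulr0 oppr0.
  by rewrite !mxE oppr_gt0 pmulr_rlt0.
have key3 : U !=set0 -> L !=set0.
  move=> [l [w [t [Dw Mw wn _]]]].
  have [r r0 [t' D']] := RC _ _ Dw.
  exists ((dotv c (mw (-(r*:w))) - t') / (- (-(r *: w)) ord0 j0)), (-(r*:w)), t'; split => //.
    by move=> j kj; rewrite !mxE Mw // mulr0 oppr0.
  by rewrite !mxE oppr_lt0 mulr_gt0.
pose lam := sup L.
exists (c + (lam - g) *: e) => w t Dw Mw.
have de : dotv (c + (lam - g) *: e) w = dotv c (mw w) + w ord0 j0 * lam.
  by rewrite dotvDl dotvZl (dotvC e) dotv_delta dmw; ring.
rewrite de; case: (ltrgtP (w ord0 j0) 0) => hw.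
- have Ll : L ((dotv c (mw w) - t) / (- w ord0 j0)) by exists w, t.
  have Lne : L !=set0 by exists ((dotv c (mw w) - t) / (- w ord0 j0)).
  have [u Uu] := key2 Lne.
  have le : (dotv c (mw w) - t) / (- w ord0 j0) <= lam.
    rewrite /lam; apply: sup_upper_bound => //; split => //.
    by exists u => x Lx; exact: key1.
  move: le; rewrite ler_pdivrMr ?oppr_gt0 //; nra.
- have Uu : U ((t - dotv c (mw w)) / w ord0 j0) by exists w, t.
  have Lne : L !=set0 by apply: key3; exists ((t - dotv c (mw w)) / w ord0 j0).
  have le : lam <= (t - dotv c (mw w)) / w ord0 j0.
    rewrite /lam; apply: ge_sup => // x Lx; exact: key1.
  move: le; rewrite ler_pdivlMr //; nra.
- have Mw' : forall j : 'I_N, (k <= j)%N -> w ord0 j = 0.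
    move=> j kj; case: (ltngtP k j) => kj'.
    - exact: Mw.
    - by move: kj; rewrite leqNgt kj'.
    - by have -> : j = j0 by apply: val_inj; rewrite /= kj'.
  by rewrite hw mul0r addr0 dmw hw mul0r subr0; apply: Hc.
Qed.
End HB.

Section RI.
Variable R : realType.

Lemma convcomb k (E : set 'rV[R]_k) (e0 : 'rV[R]_k) : convex_set E -> E e0 ->
  forall m (v : 'I_m -> 'rV[R]_k) (mu : 'I_m -> R), (forall i, E (e0 + v i)) ->
  (forall i, 0 <= mu i) -> \sum_i mu i <= 1 -> E (e0 + \sum_i mu i *: v i).
Proof.
move=> cE E0; elim => [|m IH] v mu Ev mu0 mu1.
  by rewrite big_ord0 addr0.
rewrite big_ord_recr /=; move: mu1; rewrite big_ord_recr /= => mu1.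
set mm := mu ord_max in mu1 *.
have s0 : 0 <= \sum_(i < m) mu (widen_ord (leqnSn m) i) by apply: sumr_ge0.
have [mm1|mm1] := eqVneq mm 1.
  have s00 : \sum_(i < m) mu (widen_ord (leqnSn m) i) = 0.
    by apply/eqP; rewrite eq_le s0 andbT; move: mu1; rewrite mm1; lra.
  rewrite big1 ?add0r ?mm1 ?scale1r //.
  by move=> i _; rewrite (psumr_eq0P _ s00) // ?scale0r // => j _; apply: mu0.
have mmlt : mm < 1 by rewrite lt_neqAle mm1 /=; move: mu1; lra.
have pos : 0 < 1 - mm by rewrite subr_gt0.
have H1 : forall i : 'I_m, 0 <= mu (widen_ord (leqnSn m) i) / (1 - mm).
  by move=> i; rewrite divr_ge0 // ltW.
have H2 : \sum_(i < m) mu (widen_ord (leqnSn m) i) / (1 - mm) <= 1.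
  rewrite -mulr_suml ler_pdivrMr // mul1r; lra.
have Ex := IH (fun i => v (widen_ord (leqnSn m) i)) _ (fun i => Ev _) H1 H2.
have := cE _ _ Ex (Ev ord_max) (1 - mm); rewrite subr_ge0 (ltW mmlt) lerBlDr lerDl mu0 => /(_ isT isT).
congr E; rewrite scalerDr scaler_sumr.
have -> : 1 - (1 - mm) = mm by ring.
rewrite scalerDr addrACA -scalerDl.
have -> : 1 - mm + mm = 1 by ring.
rewrite scale1r; congr (_ + (_ + _)); apply: eq_bigr => i _.
by rewrite scalerA mulrCA divff ?mulr1 // gt_eqF.
Qed.


Lemma splitP' m1 m2 (i : 'I_(m1 + m2)) : (exists j, i = lshift m2 j) \/ (exists j, i = rshift m1 j).
Proof. by rewrite -(splitK i); case: (fintype.split i) => j; [left|right]; exists j. Qed.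

Lemma ri_core k (E C : set 'rV[R]_k) (a : 'rV[R]_k) : convex_set E ->
  E `<=` C -> C `<=` eclosure E -> ri C a ->
  exists2 rho, 0 < rho & forall x, C x -> forall u, u = x - a ->
  forall t : R, `|t| <= 1 -> (forall j, `|t * u ord0 j| <= rho) -> E (a + t *: u).
Proof.
move=> cE EC CE [Ca [D D0 HD]].
have [e0 E0 _] := CE _ Ca 1 ltr01.
pose P (r : nat) := exists m (B : 'M[R]_(m, k)), (forall i, E (e0 + row i B)) /\ \rank B = r.
have P0 : exists r, `[< P r >] by exists 0%N; apply/asboolP; exists 0%N, 0; split; [by case | exact: mxrank0].
have Pub : forall r, `[< P r >] -> (r <= k)%N.
  by move=> r /asboolP [m [B [_ <-]]]; apply: rank_leq_col.
case: (ex_maxnP P0 Pub) => r /asboolP [m [B [EB rB]]] rmax.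
have span : forall e, E e -> ((e - e0) <= B)%MS.
  move=> e Ee; apply: contraT => nsub.
  pose B' := col_mx B (e - e0).
  have EB' : forall i, E (e0 + row i B').
    move=> i; case: (splitP' i) => -[j ->].
      by rewrite rowKu.
    by rewrite rowKd row_id addrC subrK.
  have sBB' : (B <= B')%MS by rewrite -addsmxE addsmxSl.
  have := mxrank_leqif_sup sBB'; rewrite col_mx_sub submx_refl (negPf nsub) /= => -[_ hne].
  have : (\rank B' <= r)%N by apply: rmax; apply/asboolP; exists (m + 1)%N, B'.
  rewrite -rB leqNgt ltn_neqAle hne /=.
  by rewrite mxrankS // (mxrank_leqif_sup sBB').
pose Pm := pinvmx B. pose Q : 'M[R]_k := 1%:M - Pm *m B.
have inQ : forall v : 'rV_k, (v <= B)%MS -> v *m Q = 0.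
  by move=> v vB; rewrite mulmxBr mulmx1 mulmxA mulmxKpV // subrr.
have Qin : forall v : 'rV_k, v *m Q = 0 -> v *m Pm *m B = v.
  by move=> v /eqP; rewrite mulmxBr mulmx1 mulmxA subr_eq0 => /eqP <-.
have Ce : forall x, C x -> (x - e0) *m Q = 0.
  move=> x Cx; apply/matrixP => i j; rewrite (ord1 i) [RHS]mxE.
  apply: (@small_zero _ _ (Kmx Q)) => d d0.
  have [e Ee He] := CE _ Cx d d0.
  have -> : (x - e0) *m Q = (x - e) *m Q.
    have -> : x - e0 = (x - e) + (e - e0) by rewrite addrA subrK.
    by rewrite mulmxDl (inQ _ (span _ Ee)) addr0.
  apply: mulmx_bound => l; have := eball_entry (ltW d0) He l; rewrite !mxE distrC; exact: ltW.
pose M : R := m.+1%:R.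
have M1 : 1 <= M by rewrite /M ler1n.
have M0 : 0 < M by apply: lt_le_trans M1.
pose x1 := M^-1.
have Mx : M * x1 = 1 by rewrite /x1 divff // gt_eqF.
have x10 : 0 < x1 by rewrite invr_gt0.
pose b0 := e0 + x1 *: \sum_i row i B.
pose rho := x1 ^+ 2.
have rho0 : 0 < rho by rewrite exprn_gt0.
have Simp : forall c : 'rV_m, (forall i, `|c ord0 i| <= rho) -> E (b0 + c *m B).
  move=> c Hc.
  have -> : b0 + c *m B = e0 + \sum_i (x1 + c ord0 i) *: row i B.
    rewrite /b0 mulmx_sum_row scaler_sumr -addrA -big_split /=; congr (_ + _).
    by apply: eq_bigr => i _; rewrite scalerDl.
  have cge : forall i, - rho <= c ord0 i by move=> i; have := Hc i; rewrite ler_norml => /andP[].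
  have cle : forall i, c ord0 i <= rho by move=> i; have := Hc i; rewrite ler_norml => /andP[].
  apply: convcomb => //.
  - move=> i; have := cge i; rewrite /rho => h.
    have x11 : x1 <= 1 by rewrite /x1 invr_le1 // unitf_gt0.
    have : x1 ^+ 2 <= x1 by rewrite expr2 ler_piMr // ltW.
    lra.
  rewrite big_split /= sumr_const card_ord.
  have : \sum_(i < m) c ord0 i <= \sum_(i < m) rho by apply: ler_sum => i _; apply: cle.
  rewrite sumr_const card_ord => h.
  have Me : M = m%:R + 1 by rewrite /M -natr1.
  have mM : m%:R = M - 1 by rewrite Me addrK.
  have e2 : m%:R * rho = x1 - rho by rewrite mM mulrBl /rho expr2 mulrA Mx !mul1r.
  have e3 : m%:R * x1 = 1 - x1 by rewrite mM mulrBl Mx !mul1r.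
  rewrite -mulr_natl e3; move: h; rewrite -mulr_natl e2; lra.
have Eb0 : E b0 by have := Simp 0; rewrite mul0mx addr0; apply => i; rewrite mxE normr0 ltW.
pose q := dotv (a - b0) (a - b0).
have q0 : 0 <= q := dotv_ge0 _.
pose rr := D / (q + 1).
have q1 : 0 < q + 1 by rewrite ltr_wpDl.
have r0 : 0 < rr by rewrite divr_gt0.
have Dr : D = rr * (q + 1) by rewrite /rr divfK // gt_eqF.
have [a' a'E] : exists a', a' = a + rr *: (a - b0) by eexists.
have Ca' : C a'.
  apply: HD; split.
    rewrite /eball /=.
    have -> : a' - a = rr *: (a - b0) by rewrite a'E addrAC subrr add0r.
    rewrite dotvZl dotvZr -/q Dr.
    have : 0 < rr * rr by rewrite mulr_gt0.
    nra.
  exists 2%N, (fun i : 'I_2 => if i == ord0 then 1 + rr else - rr),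
    (fun i : 'I_2 => if i == ord0 then a else b0); split.
  - by move=> i; case: (i == ord0) => //; apply: EC.
  - by rewrite !big_ord_recl big_ord0 /=; ring.
  - rewrite !big_ord_recl big_ord0 /= addr0.
    by apply/matrixP => i j; rewrite a'E !mxE; ring.
pose lam := (1 + rr)^-1.
have rr10 : 0 < 1 + rr by rewrite addr_gt0.
have lam0 : 0 < lam by rewrite invr_gt0.
have lamr : lam * (1 + rr) = 1 by rewrite mulVf // gt_eqF.
have lam1 : 0 < 1 - lam.
  have : lam * rr > 0 by rewrite mulr_gt0.
  move: lamr; rewrite mulrDr mulr1; lra.
pose KP := Kmx Pm + 1.
have KP0 : 0 < KP by rewrite ltr_wpDl ?Kmx_ge0.
pose rho' := rho * (1 - lam) / (2 * KP).
have rho'0 : 0 < rho' by rewrite divr_gt0 ?mulr_gt0.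
have Core : forall u : 'rV_k, u *m Q = 0 -> (forall j, `|u ord0 j| <= rho') -> E (a + u).
  move=> u uQ ub.
  have [e' Ee' He'] := CE _ Ca' _ rho'0.
  pose v := (1 - lam)^-1 *: (u - lam *: (e' - a')).
  have vQ : v *m Q = 0.
    rewrite /v; have -> : e' - a' = (e' - e0) - (a' - e0) by rewrite opprB addrA subrK.
    have h1 : (e' - e0) *m Q = 0 := Ce _ (EC _ Ee').
    have h2 : (a' - e0) *m Q = 0 := Ce _ Ca'.
    by rewrite -scalemxAl mulmxBl -scalemxAl mulmxBl h1 h2 uQ subrr scaler0 subrr scaler0.
  have vb : forall j, `|v ord0 j| <= rho / KP.
    move=> j; rewrite /v !mxE normrM (ger0_norm (_ : 0 <= (1 - lam)^-1)); last by rewrite invr_ge0 ltW.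
    have h1 := ub j.
    have h2 : `|e' ord0 j - a' ord0 j| <= rho' by apply: ltW; apply: eball_entry => //; apply: ltW.
    have h3 : `|u ord0 j - lam * (e' ord0 j - a' ord0 j)| <= 2 * rho'.
      apply: (le_trans (ler_normB _ _)); rewrite normrM (ger0_norm (ltW lam0)).
      have : lam * `|e' ord0 j - a' ord0 j| <= rho'.
        have l1 : lam <= 1 by rewrite -subr_ge0 ltW.
        exact: le_trans (ler_piMl (normr_ge0 _) l1) h2.
      lra.
    apply: (le_trans (ler_wpM2l _ h3)); first by rewrite invr_ge0 ltW.
    rewrite /rho' le_eqVlt; apply/orP; left.
    by apply/eqP; field; rewrite !gt_eqF.
  pose c := v *m Pm.
  have cb : forall i, `|c ord0 i| <= rho.
    move=> i; have := mulmx_bound Pm vb i; rewrite -/c => h; apply: (le_trans h).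
    rewrite mulrCA; apply: ler_piMr; first exact: ltW rho0.
    by rewrite ler_pdivrMr // mul1r /KP lerDl ler01.
  have := Simp c cb; rewrite /c Qin // => Eb0v.
  have := cE _ _ Ee' Eb0v lam (ltW lam0); rewrite (_ : lam <= 1) ?(lerBlDr) //; last by rewrite -subr_ge0 ltW.
  move=> /(_ isT); congr E; apply/matrixP => i j; rewrite /v a'E !mxE.
  by rewrite /lam; field; rewrite addrAC subrr add0r !gt_eqF.
exists rho' => // x Cx u -> t _ tb; apply: Core => [|j]; last by rewrite [X in `|X|]mxE; apply: tb.
have -> : x - a = (x - e0) - (a - e0) by rewrite opprB addrA subrK.
by rewrite -scalemxAl mulmxBl !Ce // subrr scaler0.
Qed.
End RI.

Section Sep.
Variable R : realType.

Lemma sum_abs_ge k (u : 'rV[R]_k) j : `|u ord0 j| <= \sum_i `|u ord0 i|.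
Proof. by rewrite (bigD1 j) //= lerDl sumr_ge0. Qed.

Lemma two_small k (u1 u2 : 'rV[R]_k) (rho1 rho2 : R) : 0 < rho1 -> 0 < rho2 ->
  exists r : R, [/\ 0 < r, r <= 1, (forall j, `|r * u1 ord0 j| <= rho1) &
    (forall j, `|r * u2 ord0 j| <= rho2)].
Proof.
move=> r1 r2; set M1 := \sum_i `|u1 ord0 i|; set M2 := \sum_i `|u2 ord0 i|.
have M10 : 0 <= M1 by apply: sumr_ge0.
have M20 : 0 <= M2 by apply: sumr_ge0.
set S := 1 + M1 / rho1 + M2 / rho2.
have S1 : 1 <= S by rewrite /S -addrA lerDl addr_ge0 // divr_ge0 // ltW.
have S0 : 0 < S by apply: lt_le_trans S1.
exists S^-1; split.
- by rewrite invr_gt0.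
- by rewrite invr_le1 // unitf_gt0.
- move=> j; rewrite normrM ger0_norm ?invr_ge0 ?(ltW S0) // ler_pdivrMl //.
  apply: (le_trans (sum_abs_ge u1 j)); rewrite -/M1 /S !mulrDl mul1r divfK ?gt_eqF //.
  by have := mulr_ge0 (divr_ge0 M20 (ltW r2)) (ltW r1); lra.
- move=> j; rewrite normrM ger0_norm ?invr_ge0 ?(ltW S0) // ler_pdivrMl //.
  apply: (le_trans (sum_abs_ge u2 j)); rewrite -/M2 /S !mulrDl mul1r (_ : M2 / rho2 * rho2 = M2); last by rewrite divfK // gt_eqF.
  by have := mulr_ge0 (divr_ge0 M10 (ltW r1)) (ltW r2); lra.
Qed.

Lemma ge0_small (y K : R) : (forall d, 0 < d -> - (K * d) <= y) -> 0 <= y.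
Proof.
move=> H; rewrite leNgt; apply/negP => yn.
pose K' := `|K| + 1.
have n1 : 0 < K' by rewrite ltr_wpDl.
pose d := - y / (2 * K').
have dp : 0 < d by rewrite divr_gt0 ?oppr_gt0 // mulr_gt0.
have h := H d dp.
have hK : K * d <= K' * d by apply: ler_wpM2r; [exact: ltW dp | apply: (le_trans (ler_norm K)); rewrite /K' lerDl].
have e : K' * d = - y / 2 by rewrite /d; field; rewrite gt_eqF.
lra.
Qed.

Lemma entries_of_eball k (a x : 'rV[R]_k) d : 0 < d -> eball a d x ->
  forall i, `|(a - x) ord0 i| <= d.
Proof. by move=> d0 h i; rewrite !mxE distrC ltW // eball_entry // ltW. Qed.

Lemma sep N (f : 'rV[R]_N -> \bar R) (C2 : set 'rV[R]_N) (zeta : 'rV[R]_N) (alpha : R) :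
  (forall z, f z <> -oo%E) -> nearly_convex_fun f -> nearly_convex_set C2 ->
  ri (edom f) `&` ri C2 !=set0 ->
  (forall z', C2 z' -> ((alpha + dotv zeta z')%:E <= f z')%E) ->
  exists b, forall z z', edom f z -> C2 z' ->
    dotv b (z - z') + dotv zeta z + alpha <= fine (f z).
Proof.
move=> nf [E1 [cE1 E1e eE1]] [E2 [cE2 E2C CE2]] [z0 [ri1 ri2]] key.
pose Ed := [set lsubmx W | W in E1].
have cEd : convex_set Ed.
  move=> _ _ [W1 E1W1 <-] [W2 E2W2 <-] t t0 t1.
  exists (t *: W1 + (1 - t) *: W2); first exact: cE1.
  by rewrite linearD !linearZ.
have Edf : Ed `<=` edom f.
  move=> _ [W EW <-]; have := E1e _ EW; rewrite /epi /edom /= => h.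
  exact: le_lt_trans h (ltry _).
have fEd : edom f `<=` eclosure Ed.
  move=> z dz d d0.
  have fz : f z \is a fin_num by rewrite fin_numE -ltey dz andbT; apply/eqP; exact: nf.
  have [W0 W0e] : exists W0 : 'rV[R]_(N + 1), W0 = row_mx z (const_mx (fine (f z))) by eexists.
  have eW0 : epi f W0 by rewrite /epi /= W0e row_mxKl row_mxKr mxE fineK.
  have [W EW bW] := eE1 _ eW0 d d0.
  exists (lsubmx W); first by exists W.
  rewrite /eball /=; apply: le_lt_trans bW.
  have -> : lsubmx W - z = lsubmx (W - W0).
    by rewrite linearB /= W0e row_mxKl.
  by rewrite [X in _ <= X]dotv_split lerDl dotv_ge0.
have [rho1 r1 H1] := ri_core cEd Edf fEd ri1.
have [rho2 r2 H2] := ri_core cE2 E2C CE2 ri2.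
pose D (w : 'rV[R]_N) (t : R) := exists W z', [/\ E1 W, E2 z', w = lsubmx W - z' &
   t = rsubmx W ord0 ord0 - dotv zeta (lsubmx W) - alpha].
have [b Hb] : exists b, forall w t, D w t -> dotv b w <= t.
  apply: HB.
  - move=> w1 t1 w2 t2 th th0 th1 [W1 [z1 [E1W1 E2z1 -> ->]]] [W2 [z2 [E1W2 E2z2 -> ->]]].
    exists (th *: W1 + (1 - th) *: W2), (th *: z1 + (1 - th) *: z2); split.
    + exact: cE1.
    + exact: cE2.
    + by apply/matrixP => i j; rewrite !mxE; ring.
    + have -> : lsubmx (th *: W1 + (1 - th) *: W2) = th *: lsubmx W1 + (1 - th) *: lsubmx W2.
        by apply/matrixP => i j; rewrite !mxE.
      rewrite dotvDr !dotvZr !mxE; ring.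
  - move=> t [W [z' [EW Ez' w0 ->]]].
    have z'e : lsubmx W = z' by apply/eqP; rewrite -subr_eq0 -w0.
    have h2 : (f z' <= (rsubmx W ord0 ord0)%:E)%E by have := E1e _ EW; rewrite /epi /= z'e.
    have := le_trans (key _ (E2C _ Ez')) h2; rewrite lee_fin z'e; lra.
  - move=> w t [W [z' [EW Ez' -> _]]].
    have [r [r0 rle hr1 hr2]] := two_small (lsubmx W - z0) (z' - z0) r1 r2.
    have nr : `|- r| <= 1 by rewrite normrN ger0_norm // ltW.
    have hr1' : forall j, `|- r * (lsubmx W - z0) ord0 j| <= rho1 by move=> j; rewrite mulNr normrN.
    have hr2' : forall j, `|- r * (z' - z0) ord0 j| <= rho2 by move=> j; rewrite mulNr normrN.
    have EdW : Ed (lsubmx W) by exists W.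
    have [W' EW' eW'] := H1 (lsubmx W) (Edf _ EdW) _ erefl (- r) nr hr1'.
    have Ez'' := H2 z' (E2C _ Ez') _ erefl (- r) nr hr2'.
    exists r => //; exists (rsubmx W' ord0 ord0 - dotv zeta (lsubmx W') - alpha).
    exists W', (z0 + (- r) *: (z' - z0)); split => //.
    rewrite eW'; apply/matrixP => i j; rewrite !mxE; ring.
exists b => z z' dz Cz'.
have fz : f z \is a fin_num by rewrite fin_numE -ltey dz andbT; apply/eqP; exact: nf.
have [W0 W0e] : exists W0 : 'rV[R]_(N + 1), W0 = row_mx z (const_mx (fine (f z))) by eexists.
have eW0 : epi f W0 by rewrite /epi /= W0e row_mxKl row_mxKr mxE fineK.
have [beta betae] : exists beta : 'rV[R]_(N + 1), beta = row_mx (-(zeta + b)) (const_mx 1) by eexists.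
have dbeta : forall W : 'rV[R]_(N + 1),
    dotv beta W = - dotv (zeta + b) (lsubmx W) + rsubmx W ord0 ord0.
  move=> W; rewrite dotv_split betae row_mxKl row_mxKr dotvNl; congr (_ + _).
  by rewrite /dotv big_ord1 mxE mul1r.
have PhiE : forall W z1, E1 W -> E2 z1 -> 0 <= dotv beta W + dotv b z1 - alpha.
  move=> W z1 EW Ez1.
  have DW : D (lsubmx W - z1) (rsubmx W ord0 ord0 - dotv zeta (lsubmx W) - alpha) by exists W, z1.
  have := Hb _ _ DW; rewrite dbeta dotvDl dotvBr; lra.
have : 0 <= dotv beta W0 + dotv b z' - alpha.
  apply: (@ge0_small _ ((\sum_i `|beta ord0 i|) + \sum_i `|b ord0 i|)) => d d0.
  have [W EW bW] := eE1 _ eW0 d d0.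
  have [z1 Ez1 bz1] := CE2 _ Cz' d d0.
  have h1 := dot_bound beta (entries_of_eball d0 bW).
  have h2 := dot_bound b (entries_of_eball d0 bz1).
  have := PhiE _ _ EW Ez1.
  move: h1 h2; rewrite !ler_norml !dotvBr mulrDl => /andP[h1 _] /andP[h2 _]; lra.
rewrite dbeta W0e row_mxKl row_mxKr mxE dotvDl dotvBr; lra.
Qed.

End Sep.

Section Main.
Variable R : realType.
Variables (n p : nat) (f : 'rV[R]_(n + p) -> \bar R) (G : 'rV[R]_n -> set 'rV[R]_p) (xb : 'rV[R]_n).

Lemma optval_lb x y : G x y -> (optval f G x <= f (row_mx x y))%E.
Proof. by move=> Gxy; apply: ereal_inf_lbound; exists y. Qed.

Lemma gph_row x y : gph G (row_mx x y) = G x y.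
Proof. by rewrite /gph /= row_mxKl row_mxKr. Qed.

Lemma dotv_zeta (xi : 'rV[R]_n) x y : dotv (row_mx xi (0 : 'rV[R]_p)) (row_mx x y) = dotv xi x.
Proof. by rewrite dotv_row_mx dotv0l addr0. Qed.

Lemma hard (eps : R) : proper_fun f -> nearly_convex_fun f -> nearly_convex_set (gph G) ->
  optval f G xb \is a fin_num -> ri (edom f) `&` ri (gph G) !=set0 -> 0 <= eps ->
  forall xi, esubdiff (optval f G) eps xb xi -> forall eta, 0 < eta ->
  forall y, Seta f G eta xb y -> exists2 g, Gam (eta + eps) g & xiset f G xb y g xi.
Proof.
move=> [_ nf] NCf NCg mfin riI eps0 xi [_ Hsub] eta eta0 y [Gy fy].
set m := optval f G in mfin Hsub fy.
set zb := row_mx xb y.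
set Mb := fine (m xb).
have mE : m xb = Mb%:E by rewrite fineK.
have fzb_ge : (m xb <= f zb)%E by apply: optval_lb.
have fzbfin : f zb \is a fin_num.
  rewrite fin_numE; apply/andP; split; apply/eqP; first exact: nf.
  by move=> h; move: fy; rewrite h mE.
set F := fine (f zb).
have fE : f zb = F%:E by rewrite fineK.
have FM : Mb <= F by move: fzb_ge; rewrite mE fE lee_fin.
have FM2 : F <= Mb + eta by move: fy; rewrite mE fE lee_fin.
pose zeta : 'rV[R]_(n + p) := row_mx xi 0.
pose alpha := F - dotv xi xb - eta - eps.
have key : forall z', gph G z' -> ((alpha + dotv zeta z')%:E <= f z')%E.
  move=> z' gz'; rewrite -(hsubmxK z') /zeta dotv_zeta.
  set x := lsubmx z'; set y' := rsubmx z'.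
  apply: (le_trans _ (optval_lb gz')).
  have := Hsub x; rewrite mE -/m; case: (m x) => [r| |] //=.
    by rewrite !lee_fin /alpha dotvBr; lra.
  by move=> _; rewrite leey.
have [b Hb] := sep nf NCf NCg riI key.
pose a := zeta + b.
pose S := [set fine (f z) - dotv a z | z in edom f].
have Gzb : gph G zb by rewrite /zb gph_row.
have dzb : edom f zb by rewrite /edom /= fE ltry.
have Slb : lbound S (alpha - dotv b zb).
  move=> _ [z dz <-]; have := Hb _ _ dz Gzb; rewrite /a dotvDl dotvBr; lra.
have Sne : S !=set0 by exists (fine (f zb) - dotv a zb); exists zb.
pose c := inf S.
have cS : forall z, edom f z -> c <= fine (f z) - dotv a z.
  by move=> z dz; apply: ge_inf; [exists (alpha - dotv b zb) | exists z].
have cG : forall z', gph G z' -> alpha - dotv b z' <= c.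
  move=> z' gz'; apply: lb_le_inf => // _ [z dz <-].
  have := Hb _ _ dz gz'; rewrite /a dotvDl dotvBr; lra.
have aE : dotv a zb = dotv xi xb + dotv b zb by rewrite /a dotvDl /zeta /zb dotv_zeta.
pose g1 := F - dotv a zb - c.
exists (g1, eta + eps - g1).
  split => /=.
  - by have := cS _ dzb; rewrite /g1 -/F; lra.
  - by have := cG _ Gzb; rewrite /g1 aE /alpha; lra.
  - by ring.
exists a, (- b); split.
- split; first exact: fzbfin.
  move=> z; rewrite fE /=.
  case Efz: (f z) => [r| |] //=; last by have := nf z.
    have dz : edom f z by rewrite /edom /= Efz ltry.
    have := cS _ dz; rewrite Efz /= lee_fin /g1 dotvBr; lra.
  by rewrite leey.
- split => // z' gz' /=; have := cG _ gz'.
  by rewrite dotvNl dotvBr /g1 aE /alpha; lra.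
- by rewrite /a addrK.
Qed.


Lemma easy (eps : R) : proper_fun f -> optval f G xb \is a fin_num ->
  forall xi, (forall eta, 0 < eta -> exists2 y, [set: 'rV[R]_p] y &
     exists2 g, Gam (eta + eps) g & xiset f G xb y g xi) ->
  esubdiff (optval f G) eps xb xi.
Proof.
move=> [_ nf] mfin xi Hxi; split => // x.
set m := optval f G in mfin *.
set Mb := fine (m xb).
have mE : m xb = Mb%:E by rewrite fineK.
have cl : forall eta, 0 < eta -> ((dotv xi (x - xb) - eps - eta + Mb)%:E <= m x)%E.
  move=> eta eta0; apply: le_ereal_inf_tmp => _ [y' Gy' <-].
  have [y _ [[g1 g2] [/= g10 g20 gs] [a [bb [[fzb Ha] [gzb Hb] hab]]]]] := Hxi _ eta0.
  set zb := row_mx xb y in fzb Ha gzb Hb hab.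
  have Gy : G xb y by move: gzb; rewrite /zb gph_row.
  have FM : (m xb <= f zb)%E by apply: optval_lb.
  set F := fine (f zb); have fE : f zb = F%:E by rewrite fineK.
  have FM' : Mb <= F by move: FM; rewrite mE fE lee_fin.
  have hb := Hb _ (eq_ind_r (fun X => X) Gy' (gph_row x y')).
  have ha := Ha (row_mx x y').
  have ea : dotv a (row_mx x y' - zb) = dotv xi x - dotv xi xb - dotv bb (row_mx x y' - zb).
    have -> : a = row_mx xi 0 - bb by rewrite hab addrK.
    by rewrite dotvBl dotvBr /zb !dotv_zeta.
  move: ha; rewrite ea fE; case: (f (row_mx x y')) => [r| |] //=.
    rewrite !lee_fin !dotvBr /=; move: hb; rewrite !dotvBr /=; lra.
  by move=> _; rewrite leey.
rewrite mE; case Emx: (m x) => [r| |] /=.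
- rewrite lee_fin -subr_ge0; apply: (@ge0_small _ _ 1) => d d0.
  have := cl d d0; rewrite Emx lee_fin; lra.
- by rewrite leey.
- by have := cl 1 ltr01; rewrite Emx.
Qed.

End Main.

Unset Implicit Arguments.

Theorem mainTheorem11 (R : realType) (n p : nat)
  (f : 'rV[R]_(n + p) -> \bar R) (G : 'rV[R]_n -> set 'rV[R]_p) (xb : 'rV[R]_n) :
  proper_fun f -> nearly_convex_fun f -> nearly_convex_set (gph G) ->
  optval f G xb \is a fin_num ->
  ri (edom f) `&` ri (gph G) !=set0 ->
  forall eps : R, 0 <= eps ->
    esubdiff (optval f G) eps xb =
      \bigcap_(eta in [set e : R | 0 < e])
        \bigcap_(y in Seta f G eta xb)
          \bigcup_(g in Gam (eta + eps)) xiset f G xb y g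
    /\
    esubdiff (optval f G) eps xb =
      \bigcap_(eta in [set e : R | 0 < e])
        \bigcup_(y in [set: 'rV[R]_p])
          \bigcup_(g in Gam (eta + eps)) xiset f G xb y g.
Proof.
move=> pf NCf NCg mfin riI eps eps0.
have H1 := hard pf NCf NCg mfin riI eps0.
have H3 := @easy R n p f G xb eps pf mfin.
have H2 : forall xi, (forall eta, 0 < eta -> forall y, Seta f G eta xb y ->
      exists2 g, Gam (eta + eps) g & xiset f G xb y g xi) ->
    forall eta, 0 < eta -> exists2 y, [set: 'rV[R]_p] y &
      exists2 g, Gam (eta + eps) g & xiset f G xb y g xi.
  move=> xi Hxi eta eta0.
  have [_ [y Gy <-] lt] := lb_ereal_inf_adherent eta0 mfin.
  exists y => //; apply: Hxi => //; split => //; exact: ltW.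
split; apply/seteqP; split => xi /=.
- by move=> h eta eta0 y Sy; apply: H1.
- by move=> h; apply: H3; apply: H2.
- by move=> h; apply: H2 => eta eta0 y Sy; apply: H1.
- by move=> h; apply: H3.
Qed.
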